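(* Let $\mathcal{C}=\mathsf{CSS}(A,B)$ be an $[\![n,k,d]\!]$ qudit CSS code with $d\geq 3$. The number of distinct logical operations that can be implemented by permutations of the physical qudits that preserve the codespace is at most $\frac{n!}{k_{\max}!}$, where $k_{\max}=\max\{\dim A,\dim B\}$.
   Context: Let $q$ be a prime power. $A,B\subseteq\mathbb{F}_q^n$ are classical codes with parity-check matrices $H_A,H_B$ (of full row rank) satisfying $H_AH_B^T=0$; $\mathsf{CSS}(A,B)$ is the qudit stabilizer code whose $X$-type stabilizers are the generalized Paulis $X^{v}$ for $v$ in the row space of $H_A$ and whose $Z$-type stabilizers are $Z^{w}$ for $w$ in the row space of $H_B$. It has $n$ physical qudits, $k=\dim A+\dim B-n$ logical qudits, and distance $d$. A permutation of the physical qudits preserving the codespace is a logical operator; two such are counted as the same logical operation if they act identically on the codespace. *)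

(* Defs.v *)
From HB Require Import structures.
From mathcomp Require Import all_boot all_order all_algebra all_fingroup all_field.
Set Implicit Arguments. Unset Strict Implicit. Unset Printing Implicit Defensive.
Import GRing.Theory Num.Theory.
Local Open Scope ring_scope.

(* Hilbert space of n qudits: C^(F^n), computational basis indexed by 'rV[F]_n. *)
Definition state (F : finFieldType) (n : nat) := {ffun 'rV[F]_n -> algC}.

Definition dotv (F : finFieldType) (n : nat) (u x : 'rV[F]_n) : F := (u *m x^T) 0 0.

(* Nontrivial additive character chi : (F,+) -> C^x  (e.g. chi a = omega^(tr a)). *)
Definition is_nontriv_add_char (F : finFieldType) (chi : F -> algC) : Prop :=
  chi 0 = 1 /\ (forall a b, chi (a + b) = chi a * chi b) /\ exists a, chi a != 1.

(* Generalized Paulis: X^v |x> = |x + v>,  Z^w |x> = chi(w.x) |x>. *)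
Definition Xop (F : finFieldType) (n : nat) (v : 'rV[F]_n) (psi : state F n) : state F n :=
  [ffun x => psi (x - v)].
Definition Zop (F : finFieldType) (n : nat) (chi : F -> algC) (w : 'rV[F]_n)
  (psi : state F n) : state F n :=
  [ffun x => chi (dotv w x) * psi x].

(* Permutation of the physical qudits: sends |x> to |x o s^-1>. *)
Definition Pop (F : finFieldType) (n : nat) (s : 'S_n) (psi : state F n) : state F n :=
  [ffun x => psi (col_perm s x)].

Definition in_code (F : finFieldType) (n mA mB : nat) (chi : F -> algC)
  (HA : 'M[F]_(mA, n)) (HB : 'M[F]_(mB, n)) (psi : state F n) : Prop :=
  (forall v : 'rV[F]_n, (v <= HA)%MS -> Xop v psi = psi) /\
  (forall w : 'rV[F]_n, (w <= HB)%MS -> Zop chi w psi = psi).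

Definition preserves_code (F : finFieldType) (n mA mB : nat) (chi : F -> algC)
  (HA : 'M[F]_(mA, n)) (HB : 'M[F]_(mB, n)) (s : 'S_n) : Prop :=
  forall psi, in_code chi HA HB psi -> in_code chi HA HB (Pop s psi).

Definition same_logical (F : finFieldType) (n mA mB : nat) (chi : F -> algC)
  (HA : 'M[F]_(mA, n)) (HB : 'M[F]_(mB, n)) (s t : 'S_n) : Prop :=
  forall psi, in_code chi HA HB psi -> Pop s psi = Pop t psi.

Definition in_ker (F : finFieldType) (m n : nat) (H : 'M[F]_(m, n)) (v : 'rV[F]_n) : Prop :=
  v *m H^T = 0.
Definition code_dim (F : finFieldType) (m n : nat) (H : 'M[F]_(m, n)) : nat :=
  \rank (kermx H^T).

Definition pauli_wt (F : finFieldType) (n : nat) (v w : 'rV[F]_n) : nat :=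
  #|[set i : 'I_n | (v 0 i != 0) || (w 0 i != 0)]|.

(* distance >= d: every nontrivial logical Pauli X^v Z^w (v in B, w in A,
   i.e. commuting with all stabilizers, but (v,w) not in rowspace HA x rowspace HB)
   has weight >= d. *)
Definition css_distance_ge (F : finFieldType) (n mA mB : nat)
  (HA : 'M[F]_(mA, n)) (HB : 'M[F]_(mB, n)) (d : nat) : Prop :=
  forall v w : 'rV[F]_n, in_ker HB v -> in_ker HA w ->
    ~~ ((v <= HA)%MS && (w <= HB)%MS) -> (d <= pauli_wt v w)%N.

(* Main.v *)
Require Import Defs.
From HB Require Import structures.
From mathcomp Require Import all_boot all_order all_algebra all_fingroup all_field.
Import GRing.Theory Num.Theory.
Local Open Scope ring_scope.
Set Implicit Arguments. Unset Strict Implicit.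

Section Helpers.
Variable F : finFieldType.

Lemma subB_sub m1 m2 n (A B : 'M[F]_(m1, n)) (C : 'M[F]_(m2, n)) :
  (A <= C)%MS -> (B <= C)%MS -> (A - B <= C)%MS.
Proof.
move=> hA hB; apply: addmx_sub => //.
by rewrite -scaleN1r; apply: scalemx_sub.
Qed.

Lemma ker_of_sub n mA mB (HA : 'M[F]_(mA, n)) (HB : 'M[F]_(mB, n)) (y : 'rV[F]_n) :
  HA *m HB^T = 0 -> (y <= HA)%MS -> y *m HB^T = 0.
Proof. by move=> hAB /submxP [u ->]; rewrite -mulmxA hAB mulmx0. Qed.

Lemma dot_zero n mB (HB : 'M[F]_(mB, n)) (w x : 'rV[F]_n) :
  (w <= HB)%MS -> x *m HB^T = 0 -> dotv w x = 0.
Proof.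
move=> /submxP [u ->] hx; rewrite /dotv -mulmxA.
have -> : HB *m x^T = (x *m HB^T)^T by rewrite trmx_mul trmxK.
by rewrite hx trmx0 mulmx0 mxE.
Qed.

Lemma code_support n mA mB (chi : F -> algC) (HA : 'M[F]_(mA, n)) (HB : 'M[F]_(mB, n))
  psi x : is_nontriv_add_char chi -> in_code chi HA HB psi -> psi x != 0 ->
  x *m HB^T = 0.
Proof.
move=> [chi0 [chiD [a cha]]] [_ hZ] hpsi.
apply/rowP => i; rewrite [X in _ = X]mxE; apply/eqP/negPn/negP => hc.
set c := (x *m HB^T) 0 i in hc.
pose w := (a / c) *: row i HB.
have wsub : (w <= HB)%MS by apply: scalemx_sub; apply: row_sub.
have dw : dotv w x = a.
  rewrite /dotv -scalemxAl mxE -row_mul mxE.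
  have -> : (HB *m x^T) i 0 = c by rewrite /c -[HB in LHS]trmxK -trmx_mul mxE.
  by rewrite mulfVK.
have := congr1 (fun f : state F n => f x) (hZ w wsub); rewrite /Zop ffunE dw => /eqP.
rewrite -subr_eq0 -{2}(mul1r (psi x)) -mulrBl mulf_eq0 subr_eq0 (negPf cha) /=.
by rewrite (negPf hpsi).
Qed.

Definition coset_state {n mA} (HA : 'M[F]_(mA, n)) (x0 : 'rV[F]_n) : state F n :=
  [ffun y => if (y - x0 <= HA)%MS then (1 : algC) else 0].

Lemma coset_in_code n mA mB (chi : F -> algC) (HA : 'M[F]_(mA, n)) (HB : 'M[F]_(mB, n)) x0 :
  is_nontriv_add_char chi -> HA *m HB^T = 0 -> x0 *m HB^T = 0 ->
  in_code chi HA HB (coset_state HA x0).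
Proof.
move=> [chi0 _] hAB hx0; split.
- move=> v hv; apply/ffunP => y; rewrite /Xop !ffunE.
  have -> : y - v - x0 = (y - x0) - v by rewrite addrAC.
  case: (boolP (y - x0 <= HA)%MS) => h.
    by rewrite subB_sub.
  case: (boolP (y - x0 - v <= HA)%MS) => // h2; case/negP: h.
  by rewrite -(subrK v (y - x0)) addmx_sub.
- move=> w hw; apply/ffunP => y; rewrite /Zop !ffunE.
  case: (boolP (y - x0 <= HA)%MS) => h; last by rewrite mulr0.
  rewrite (dot_zero hw) ?chi0 ?mulr1 //.
  by rewrite -(subrK x0 y) mulmxDl (ker_of_sub hAB h) hx0 addr0.
Qed.


Lemma presA n mA mB (chi : F -> algC) (HA : 'M[F]_(mA, n)) (HB : 'M[F]_(mB, n)) (s : 'S_n) :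
  is_nontriv_add_char chi -> HA *m HB^T = 0 -> preserves_code chi HA HB s ->
  forall y : 'rV[F]_n, (y <= HA)%MS -> (col_perm s y <= HA)%MS.
Proof.
move=> hchi hAB hs y hy.
have [hX _] := hs _ (coset_in_code (HA:=HA) (x0:=0) hchi hAB (mul0mx _ _)).
have := congr1 (fun f : state F n => f y) (hX y hy).
rewrite /Xop /Pop !ffunE subrr !subr0 (raddf0 (col_perm s)) sub0mx.
by case: (col_perm s y <= HA)%MS => // /eqP; rewrite oner_eq0.
Qed.

Lemma presB n mA mB (chi : F -> algC) (HA : 'M[F]_(mA, n)) (HB : 'M[F]_(mB, n)) (s : 'S_n) :
  is_nontriv_add_char chi -> HA *m HB^T = 0 -> preserves_code chi HA HB s ->
  forall x : 'rV[F]_n, x *m HB^T = 0 -> col_perm s^-1 x *m HB^T = 0.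
Proof.
move=> hchi hAB hs x hx.
have hc := hs _ (coset_in_code hchi hAB hx).
apply: (code_support hchi hc).
by rewrite /Pop /coset_state !ffunE -col_permM mulgV col_perm1 subrr sub0mx oner_eq0.
Qed.

Lemma rank_pres p n (K : 'M[F]_(p, n)) (P Q : 'M[F]_n) :
  P *m Q = 1%:M -> (forall x : 'rV[F]_n, (x <= K)%MS -> (x *m P <= K)%MS) ->
  forall x : 'rV[F]_n, (x <= K)%MS -> (x *m Q <= K)%MS.
Proof.
move=> hPQ hP x hx.
have KP : (K *m P <= K)%MS.
  by apply/row_subP => i; rewrite row_mul; apply: hP; apply: row_sub.
have uP : P \in unitmx by case: (mulmx1_unit hPQ).
have rk : \rank (K *m P) = \rank K by rewrite mxrankMfree // row_free_unit.
have KKP : (K <= K *m P)%MS by rewrite -(mxrank_leqif_sup KP) rk.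
have := submxMr Q (submx_trans hx KKP).
by rewrite -mulmxA hPQ mulmx1.
Qed.

Lemma orth_sub m n (H : 'M[F]_(m, n)) (u : 'rV[F]_n) :
  (forall x : 'rV[F]_n, x *m H^T = 0 -> u *m x^T = 0) -> (u <= H)%MS.
Proof.
move=> hu; set K := kermx H^T.
have KH : K *m H^T = 0 by apply: mulmx_ker.
have uK : (u <= kermx K^T)%MS.
  rewrite sub_kermx; apply/eqP; apply: trmx_inj; rewrite trmx_mul trmxK trmx0.
  apply/row_matrixP => j; rewrite row_mul row0.
  have h : u *m (row j K)^T = 0.
    by apply: hu; rewrite -row_mul KH row0.
  by rewrite -[row j K]trmxK -[u]trmxK -trmx_mul trmxK h trmx0.
have HK : (H <= kermx K^T)%MS.
  by rewrite sub_kermx -[H]trmxK -trmx_mul KH trmx0.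
have rk : \rank (kermx K^T) = \rank H.
  rewrite mxrank_ker mxrank_tr /K mxrank_ker mxrank_tr subKn //.
  exact: rank_leq_col.
have KsH : (kermx K^T <= H)%MS by rewrite -(mxrank_leqif_sup HK) rk.
exact: submx_trans uK KsH.
Qed.

Lemma info_set m n (H : 'M[F]_(m, n)) : row_free H ->
  exists f : 'I_m -> 'I_n, injective f /\
    forall y : 'rV[F]_n, (y <= H)%MS -> (forall i, y 0 (f i) = 0) -> y = 0.
Proof.
move=> hfree.
have rkA : row_full H^T by rewrite /row_full mxrank_tr.
exists (fullrankfun rkA); split; first exact: fullrankfun_inj.
move=> y /submxP [u ->] hy.
have Cu : (rowsub (fullrankfun rkA) H^T)^T \in unitmx.
  by rewrite unitmx_tr fullrowsub_unit.
have h0 : u *m (rowsub (fullrankfun rkA) H^T)^T = 0.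
  apply/rowP => j; rewrite [X in _ = X]mxE -(hy j) !mxE.
  by apply: eq_bigr => k _; rewrite !mxE.
by rewrite -[u](mulmxK Cu) h0 !mul0mx.
Qed.

Lemma agree m n (H : 'M[F]_(m, n)) (f : 'I_m -> 'I_n) (s t : 'S_n) :
  (forall y : 'rV[F]_n, (y <= H)%MS -> (forall i, y 0 (f i) = 0) -> y = 0) ->
  (forall y : 'rV[F]_n, (y <= H)%MS -> (col_perm s y <= H)%MS) ->
  (forall y : 'rV[F]_n, (y <= H)%MS -> (col_perm t y <= H)%MS) ->
  (forall i, s (f i) = t (f i)) ->
  forall j, col (s j) H = col (t j) H.
Proof.
move=> hinfo hs ht hst j; apply/colP => r; rewrite !mxE.
have hr := row_sub r H.
have d0 : col_perm s (row r H) - col_perm t (row r H) = 0.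
  apply: hinfo; first by apply: subB_sub; [apply: hs | apply: ht].
  by move=> i; rewrite !mxE hst subrr.
have := congr1 (fun v : 'rV[F]_n => v 0 j) d0.
by rewrite !mxE => /eqP; rewrite subr_eq0 => /eqP.
Qed.

Definition ev n (a b : 'I_n) : 'rV[F]_n := delta_mx 0 a - delta_mx 0 b.

Lemma ev_ker m n (H : 'M[F]_(m, n)) a b : col a H = col b H -> ev a b *m H^T = 0.
Proof.
move=> hab; apply: trmx_inj; rewrite trmx_mul trmxK trmx0 /ev linearB /=.
by rewrite !trmx_delta mulmxBr -!colE hab subrr.
Qed.

Lemma ev_dot n (a b : 'I_n) (x : 'rV[F]_n) : dotv (ev a b) x = x 0 a - x 0 b.
Proof. by rewrite /dotv /ev mulmxBl -!rowE !mxE. Qed.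

Lemma ev_wt n (a b : 'I_n) :
  (pauli_wt 0 (ev a b) <= 2)%N /\ (pauli_wt (ev a b) 0 <= 2)%N.
Proof.
have sub : forall (S : {set 'I_n}), (forall i, i \in S -> (ev a b) 0 i != 0) ->
  (#|S| <= 2)%N.
  move=> S hS; apply: (@leq_trans #|[set a; b]|); last by rewrite cards2; case: (a != b).
  apply: subset_leq_card; apply/subsetP => i /hS; rewrite !inE /ev !mxE /=.
  by case: (i == a); case: (i == b); rewrite ?eqxx ?orbT // subrr eqxx.
split; apply: sub => i; rewrite inE !mxE !eqxx /= ?orbF; by [].

Qed.

Lemma cp_sum n (s : 'S_n) (x : 'rV[F]_n) :
  col_perm s x = \sum_k x 0 k *: delta_mx 0 ((s^-1)%g k).
Proof.
apply/rowP => j; rewrite summxE (bigD1 (s j)) //= !mxE permK !eqxx mulr1.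
rewrite big1 ?addr0 // => k hk; rewrite !mxE /=.
case: eqP => [h|]; last by rewrite mulr0.
by case/eqP: hk; rewrite h permKV.
Qed.

Lemma count_inj n m (S : {set 'S_n}) (h : 'S_n -> {ffun 'I_m -> 'I_n}) :
  {in S &, injective h} -> (forall s, injectiveb (h s)) -> (#|S| <= n ^_ m)%N.
Proof.
move=> hinj hb; rewrite -(card_in_imset hinj).
have -> : (n ^_ m = #|[set f : {ffun 'I_m -> 'I_n} | injectiveb f]|)%N.
  by rewrite card_inj_ffuns !card_ord.
apply: subset_leq_card; apply/subsetP => f /imsetP [s _ ->].
by rewrite inE.
Qed.

End Helpers.
Arguments ev {F n}.

Lemma presB2 (F : finFieldType) n mA mB (chi : F -> algC) (HA : 'M[F]_(mA, n)) (HB : 'M[F]_(mB, n)) (s : 'S_n) :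
  is_nontriv_add_char chi -> HA *m HB^T = 0 -> preserves_code chi HA HB s ->
  forall w : 'rV[F]_n, (w <= HB)%MS -> (col_perm s^-1 w <= HB)%MS.
Proof.
move=> hchi hAB hs.
have h1 : forall x : 'rV[F]_n, (x <= kermx HB^T)%MS -> (x *m perm_mx s <= kermx HB^T)%MS.
  move=> x; rewrite !sub_kermx => /eqP hx; apply/eqP.
  by have := presB hchi hAB hs hx; rewrite col_permE invgK.
have h2 := rank_pres (Q := perm_mx s^-1) _ h1.
have h3 : forall x : 'rV[F]_n, x *m HB^T = 0 -> col_perm s x *m HB^T = 0.
  move=> x hx; apply/eqP; rewrite col_permE -sub_kermx; apply: h2.
    by rewrite -perm_mxM mulgV perm_mx1.
  by rewrite sub_kermx hx.
move=> w /submxP [u ->]; apply: orth_sub => x hx.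
rewrite mul_col_perm invgK -tr_col_perm -!mulmxA.
have -> : HB *m (col_perm s x)^T = (col_perm s x *m HB^T)^T.
  by rewrite trmx_mul trmxK.
by rewrite h3 // trmx0 !mulmx0.
Qed.

Unset Implicit Arguments.

Theorem theorem2 (F : finFieldType) (n mA mB : nat)
  (HA : 'M[F]_(mA, n)) (HB : 'M[F]_(mB, n)) (chi : F -> algC) :
  row_free HA -> row_free HB -> HA *m HB^T = 0 ->
  is_nontriv_add_char chi ->
  css_distance_ge HA HB 3 ->
  forall S : {set 'S_n},
    (forall s, s \in S -> preserves_code chi HA HB s) ->
    (forall s t, s \in S -> t \in S -> same_logical chi HA HB s t -> s = t) ->
    (#|S| <= n`! %/ (maxn (code_dim HA) (code_dim HB))`!)%N.
Proof.
move=> fA fB hAB hchi hd S hS hSlog.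
have rA : \rank HA = mA by apply/eqP.
have rB : \rank HB = mB by apply/eqP.
have kAE : code_dim HA = (n - mA)%N by rewrite /code_dim mxrank_ker mxrank_tr rA.
have kBE : code_dim HB = (n - mB)%N by rewrite /code_dim mxrank_ker mxrank_tr rB.
have mAn : (mA <= n)%N by rewrite -rA rank_leq_col.
have mBn : (mB <= n)%N by rewrite -rB rank_leq_col.
case: (leqP (code_dim HB) (code_dim HA)) => hk.
- rewrite kAE -ffact_factd //.
  have [f [finj finfo]] := info_set fA.
  apply: (count_inj (h := fun s : 'S_n => [ffun i => s (f i)])); last first.
    by move=> s; apply/injectiveP => i j; rewrite !ffunE => /perm_inj /finj.
  move=> s t hs ht heq; apply: hSlog => //.
  have hst : forall i, s (f i) = t (f i).
    by move=> i; have := congr1 (fun g : {ffun 'I_mA -> 'I_n} => g i) heq; rewrite !ffunE.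
  have hcols := agree finfo (presA hchi hAB (hS s hs)) (presA hchi hAB (hS t ht)) hst.
  have hev : forall j, (ev (s j) (t j) <= HB)%MS.
    move=> j; apply/negPn/negP => hn.
    have := hd 0 (ev (s j) (t j)).
    rewrite /in_ker mul0mx ev_ker // (negPf hn) andbF => /(_ erefl erefl isT).
    by have := (@ev_wt F _ (s j) (t j)).1 => h1 h2; have := leq_trans h2 h1.
  have hx : forall x : 'rV[F]_n, x *m HB^T = 0 -> col_perm s x = col_perm t x.
    move=> x hx; apply/rowP => j; rewrite !mxE; apply/eqP.
    by rewrite -subr_eq0 -ev_dot (dot_zero (hev j) hx).
  move=> psi hpsi; apply/ffunP => x.
  have cs := hS s hs psi hpsi; have ct := hS t ht psi hpsi.
  case: (eqVneq (x *m HB^T) 0) => hxk.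
    by rewrite /Pop !ffunE hx.
  have z : forall P, in_code chi HA HB P -> P x = 0.
    move=> P hP; apply/eqP/negPn/negP => hP0.
    by move/eqP: hxk; apply; apply: (code_support hchi hP hP0).
  by rewrite (z _ cs) (z _ ct).
- rewrite kBE -ffact_factd //.
  have [f [finj finfo]] := info_set fB.
  apply: (count_inj (h := fun s : 'S_n => [ffun i => (s^-1)%g (f i)])); last first.
    by move=> s; apply/injectiveP => i j; rewrite !ffunE => /perm_inj /finj.
  move=> s t hs ht heq; apply: hSlog => //.
  have hst : forall i, (s^-1)%g (f i) = (t^-1)%g (f i).
    by move=> i; have := congr1 (fun g : {ffun 'I_mB -> 'I_n} => g i) heq; rewrite !ffunE.
  have hcols := agree finfo (presB2 hchi hAB (hS s hs)) (presB2 hchi hAB (hS t ht)) hst.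
  have hev : forall j, (ev ((s^-1)%g j) ((t^-1)%g j) <= HA)%MS.
    move=> j; apply/negPn/negP => hn.
    have := hd (ev ((s^-1)%g j) ((t^-1)%g j)) 0.
    rewrite /in_ker mul0mx ev_ker // (negPf hn) /= => /(_ erefl erefl isT).
    by have := (@ev_wt F _ ((s^-1)%g j) ((t^-1)%g j)).2 => h1 h2; have := leq_trans h2 h1.
  move=> psi hpsi; apply/ffunP => x.
  have hdA : (col_perm s x - col_perm t x <= HA)%MS.
    rewrite !cp_sum -sumrB; apply: summx_sub => k _.
    by rewrite -scalerBr; apply: scalemx_sub; apply: hev.
  have := congr1 (fun P : state F n => P (col_perm s x)) (hpsi.1 _ hdA).
  by rewrite /Xop /Pop !ffunE opprB addrC subrK.
Qed.
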